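(* Consider components $m\in[M]$ sharing a common finite action set $\mathcal X_A$ (i.e. $\mathcal X_A^m=\mathcal X_A$ for all $m$) and horizon $T$. The linear relaxation of MILP (IPd) is equivalent to the fluid formulation (F): there exists a feasible solution of one with a given objective value if and only if there exists a feasible solution of the other with the same objective value. In particular $z_{\mathrm F}=z_{\mathrm R}$, where $z_{\mathrm R}$ is the value of the linear relaxation of (IPd).
   Context: Each component $m$ is a POMDP $(\mathcal X_S^m,\mathcal X_O^m,\mathcal X_A,\mathfrak p^m,\mathbf r^m)$ with initial distribution $p^m(s)$, emissions $p^m(o|s)$, transitions $p^m(s'|s,a)$, reward $r^m(s,a,s')$. For a POMDP, $\mathcal Q^{\mathrm d}(T,\mathcal X_S,\mathcal X_O,\mathcal X_A,\mathfrak p)$ is the set of $(\tau,\delta)$ with $\delta^t_{a|o}\in\{0,1\}$, $\sum_a\delta^t_{a|o}=1$, nonnegative $\tau=((\tau^1_s),(\tau^t_{soa}),(\tau^t_{sas'}))$ with (i) $\tau^1_s=p(s)$; (ii) $\sum_{o,a}\tau^t_{soa}=\nu^t_s$, $\nu^1_s=\tau^1_s$, $\nu^t_s=\sum_{s'',a''}\tau^{t-1}_{s''a''s}$ ($t\ge2$); (iii) $\sum_{\bar s}\tau^t_{sa\bar s}=\sum_o\tau^t_{soa}$; (iv) $\tau^t_{sas'}=p(s'|s,a)\sum_{\bar s}\tau^t_{sa\bar s}$; (McCormick) $\tau^t_{soa}\le p(o|s)\nu^t_s$, $\tau^t_{soa}\le\delta^t_{a|o}$, $\tau^t_{soa}\ge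 p(o|s)\nu^t_s+\delta^t_{a|o}-1$. Its linear relaxation allows $\delta^t_{a|o}\in[0,1]$. MILP (IPd): maximize $\sum_t\sum_m\sum_{s,s'\in\mathcal X_S^m,a\in\mathcal X_A}r^m(s,a,s')\tau^{t,m}_{sas'}$ s.t. $(\tau^m,\delta^m)\in\mathcal Q^{\mathrm d}(T,\mathcal X_S^m,\mathcal X_O^m,\mathcal X_A,\mathfrak p^m)$ for all $m$, $\tau^{t,m}_a=\sum_{s,o}\tau^{t,m}_{soa}$, and $\tau^{t,m}_a=\tau^{t,m+1}_a$ for all $a\in\mathcal X_A$, $m\in[M-1]$, $t\in[T]$. Fluid formulation (F): maximize $\sum_t\sum_m\sum_{s,s',a}r^m(s,a,s')x^{t,m}_{sas'}$ over nonnegative $x^{1,m}_s$, $x^{t,m}_{sas'}$, $A^t_a$ s.t. $x^{1,m}_s=\sum_{a',s'}x^{1,m}_{sa's'}$; $\sum_{s',a'}x^{t,m}_{s'a's}=\sum_{a',s'}x^{t+1,m}_{sa's'}$ for $t\in[T-1]$; $x^{1,m}_s=p^m(s)$; $x^{t,m}_{sas'}=p^m(s'|s,a)\sum_{s''}x^{t,m}_{sas''}$; $\sum_{s,s'}x^{t,m}_{sas'}=A^t_a$ for all $a,m,t$. Its value is $z_{\mathrm F}$. *)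

(* Defs.v *)
From HB Require Import structures.
From mathcomp Require Import all_boot all_order all_algebra.
Set Implicit Arguments. Unset Strict Implicit. Unset Printing Implicit Defensive.
Import Order.TTheory GRing.Theory Num.Theory.
Local Open Scope ring_scope.

(* A POMDP component with common finite action set XA:
   finite state set S, finite observation set O,
   initial distribution p0 s = p(s), emissions pe s o = p(o|s),
   transitions pt s a s' = p(s'|s,a), rewards r s a s' = r(s,a,s'). *)
Record POMDP (R : realFieldType) (XA : finType) := {
  St : finType;
  Ob : finType;
  p0 : St -> R;
  pe : St -> Ob -> R;
  pt : St -> XA -> St -> R;
  rw : St -> XA -> St -> R }.
Arguments St {R XA} p.
Arguments Ob {R XA} p.
Arguments p0 {R XA} p _.
Arguments pe {R XA} p _ _.
Arguments pt {R XA} p _ _ _.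
Arguments rw {R XA} p _ _ _.

Definition valid_pomdp (R : realFieldType) (XA : finType) (P : POMDP R XA) : Prop :=
  (forall s, 0 <= p0 P s) /\ (\sum_(s : St P) p0 P s = 1) /\
  (forall s o, 0 <= pe P s o) /\ (forall s, \sum_(o : Ob P) pe P s o = 1) /\
  (forall s a s', 0 <= pt P s a s') /\ (forall s a, \sum_(s' : St P) pt P s a s' = 1).

(* Time is 0-based: t = 0, ..., T-1 stands for the paper's 1, ..., T. *)
Definition nuv (R : realFieldType) (XA : finType) (P : POMDP R XA)
  (tau1 : St P -> R) (tauT : nat -> St P -> XA -> St P -> R) (t : nat) (s : St P) : R :=
  if t is t'.+1 then \sum_(s'' : St P) \sum_(a'' : XA) tauT t' s'' a'' s else tau1 s.

(* The set Q^d(T, X_S, X_O, X_A, p); when relax = true, its linear relaxation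
   (delta in [0,1] instead of {0,1}). *)
Definition Qd (relax : bool) (R : realFieldType) (XA : finType) (T : nat) (P : POMDP R XA)
  (tau1 : St P -> R) (tauO : nat -> St P -> Ob P -> XA -> R)
  (tauT : nat -> St P -> XA -> St P -> R) (delta : nat -> Ob P -> XA -> R) : Prop :=
  (forall t o a, (t < T)%N ->
     if relax then 0 <= delta t o a <= 1 else (delta t o a == 0) || (delta t o a == 1)) /\
  (forall t o, (t < T)%N -> \sum_(a : XA) delta t o a = 1) /\
  (forall s, 0 <= tau1 s) /\
  (forall t s o a, (t < T)%N -> 0 <= tauO t s o a) /\
  (forall t s a s', (t < T)%N -> 0 <= tauT t s a s') /\
  (forall s, tau1 s = p0 P s) /\
  (forall t s, (t < T)%N ->
     \sum_(o : Ob P) \sum_(a : XA) tauO t s o a = nuv tau1 tauT t s) /\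
  (forall t s a, (t < T)%N ->
     \sum_(sb : St P) tauT t s a sb = \sum_(o : Ob P) tauO t s o a) /\
  (forall t s a s', (t < T)%N ->
     tauT t s a s' = pt P s a s' * \sum_(sb : St P) tauT t s a sb) /\
  (forall t s o a, (t < T)%N ->
     [/\ tauO t s o a <= pe P s o * nuv tau1 tauT t s,
         tauO t s o a <= delta t o a &
         pe P s o * nuv tau1 tauT t s + delta t o a - 1 <= tauO t s o a]).

Definition relax_values (R : realFieldType) (XA : finType) (M T : nat)
  (P : 'I_M -> POMDP R XA) (v : R) : Prop :=
  exists (tau1 : forall m : 'I_M, St (P m) -> R)
         (tauO : forall m : 'I_M, nat -> St (P m) -> Ob (P m) -> XA -> R)
         (tauT : forall m : 'I_M, nat -> St (P m) -> XA -> St (P m) -> R)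
         (delta : forall m : 'I_M, nat -> Ob (P m) -> XA -> R),
    (forall m : 'I_M, Qd true T (tau1 m) (tauO m) (tauT m) (delta m)) /\
    (let tauA (m : 'I_M) (t : nat) (a : XA) :=
         \sum_(s : St (P m)) \sum_(o : Ob (P m)) tauO m t s o a in
     forall (m : nat) (h1 : (m < M)%N) (h2 : (m.+1 < M)%N) (t : nat) (a : XA),
       (t < T)%N -> tauA (Ordinal h1) t a = tauA (Ordinal h2) t a) /\
    v = \sum_(t < T) \sum_(m : 'I_M) \sum_(s : St (P m)) \sum_(a : XA)
          \sum_(s' : St (P m)) rw (P m) s a s' * tauT m t s a s'.

Definition fluid_values (R : realFieldType) (XA : finType) (M T : nat)
  (P : 'I_M -> POMDP R XA) (v : R) : Prop :=
  exists (x1 : forall m : 'I_M, St (P m) -> R)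
         (x : forall m : 'I_M, nat -> St (P m) -> XA -> St (P m) -> R)
         (A : nat -> XA -> R),
    (forall m s, 0 <= x1 m s) /\
    (forall m t s a s', (t < T)%N -> 0 <= x m t s a s') /\
    (forall t a, (t < T)%N -> 0 <= A t a) /\
    (forall m s, x1 m s = \sum_(a' : XA) \sum_(s' : St (P m)) x m 0%N s a' s') /\
    (forall m t s, (t.+1 < T)%N ->
       \sum_(s' : St (P m)) \sum_(a' : XA) x m t s' a' s =
       \sum_(a' : XA) \sum_(s' : St (P m)) x m t.+1 s a' s') /\
    (forall m s, x1 m s = p0 (P m) s) /\
    (forall m t s a s', (t < T)%N ->
       x m t s a s' = pt (P m) s a s' * \sum_(s'' : St (P m)) x m t s a s'') /\
    (forall m t a, (t < T)%N ->
       \sum_(s : St (P m)) \sum_(s' : St (P m)) x m t s a s' = A t a) /\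
    v = \sum_(t < T) \sum_(m : 'I_M) \sum_(s : St (P m)) \sum_(a : XA)
          \sum_(s' : St (P m)) rw (P m) s a s' * x m t s a s'.

Definition is_opt_value (R : realFieldType) (V : R -> Prop) (z : R) : Prop :=
  V z /\ forall w, V w -> w <= z.

(* Main.v *)
Require Import Defs.
From HB Require Import structures.
From mathcomp Require Import all_boot all_order all_algebra.
From mathcomp.algebra_tactics Require Import ring lra.
Set Implicit Arguments. Unset Strict Implicit. Unset Printing Implicit Defensive.
Import Order.TTheory GRing.Theory Num.Theory.
Local Open Scope ring_scope.

Section Comp.
Variables (R : realFieldType) (XA : finType) (T : nat) (Q : POMDP R XA).

Lemma term_le_sum (I : finType) (F : I -> R) i :
  (forall j, 0 <= F j) -> F i <= \sum_j F j.
Proof.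
move=> H; rewrite (bigD1 i) //= lerDl; apply: sumr_ge0 => j _; exact: H.
Qed.

Lemma relax_to_fluid tau1 tauO tauT delta :
  (0 < T)%N -> Qd true T tau1 tauO tauT delta ->
  [/\ forall s, tau1 s = \sum_(a : XA) \sum_(s' : St Q) tauT 0%N s a s',
      forall t s, (t.+1 < T)%N ->
       \sum_(s' : St Q) \sum_(a' : XA) tauT t s' a' s =
       \sum_(a' : XA) \sum_(s' : St Q) tauT t.+1 s a' s' &
      forall t a, (t < T)%N ->
       \sum_(s : St Q) \sum_(s' : St Q) tauT t s a s' =
       \sum_(s : St Q) \sum_(o : Ob Q) tauO t s o a].
Proof.
move=> hT [_ [_ [_ [_ [_ [_ [h2 [h3 _]]]]]]]]; split.
- move=> s; rewrite -[tau1 s]/(nuv tau1 tauT 0 s) -h2 // exchange_big /=.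
  by apply: eq_bigr => a _; rewrite h3.
- move=> t s ht; rewrite -[LHS]/(nuv tau1 tauT t.+1 s) -h2 // exchange_big /=.
  by apply: eq_bigr => a _; rewrite h3.
- move=> t a ht; apply: eq_bigr => s _; exact: h3.
Qed.

Lemma fluid_to_relax (x1 : St Q -> R) (x : nat -> St Q -> XA -> St Q -> R) :
  valid_pomdp Q ->
  (forall s, 0 <= x1 s) ->
  (forall t s a s', (t < T)%N -> 0 <= x t s a s') ->
  (forall s, x1 s = \sum_(a' : XA) \sum_(s' : St Q) x 0%N s a' s') ->
  (forall t s, (t.+1 < T)%N ->
       \sum_(s' : St Q) \sum_(a' : XA) x t s' a' s =
       \sum_(a' : XA) \sum_(s' : St Q) x t.+1 s a' s') ->
  (forall s, x1 s = p0 Q s) ->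
  (forall t s a s', (t < T)%N ->
       x t s a s' = pt Q s a s' * \sum_(s'' : St Q) x t s a s'') ->
  Qd true T x1 (fun t s o a => pe Q s o * \sum_(s' : St Q) x t s a s') x
     (fun t o a => \sum_(s : St Q) \sum_(s' : St Q) x t s a s').
Proof.
move=> [hp0 [hp0s [hpe [hpes [hpt hpts]]]]] hx1 hx hx10 hflow hx1p hpt'.
set y := fun t s a => \sum_(s' : St Q) x t s a s'.
have hy : forall t s a, (t < T)%N -> 0 <= y t s a.
  by move=> t s a ht; apply: sumr_ge0 => s' _; exact: hx.
have hnu : forall t s, (t < T)%N -> nuv x1 x t s = \sum_a y t s a.
  case=> [|t] s ht /=; first exact: hx10.
  by apply: hflow.
have hsum : forall t, (t < T)%N -> \sum_s \sum_a y t s a = 1.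
  elim=> [|t IH] ht.
    by rewrite -hp0s; apply: eq_bigr => s _; rewrite -hx10 hx1p.
  have ht' : (t < T)%N by apply: ltn_trans ht.
  rewrite -(IH ht') (eq_bigr (fun s => \sum_(s' : St Q) \sum_(a' : XA) x t s' a' s)); last first.
    by move=> s _; rewrite hflow.
  rewrite exchange_big /=.
  apply: eq_bigr => s' _; rewrite exchange_big /=; apply: eq_bigr => a _.
  rewrite (eq_bigr (fun s => pt Q s' a s * y t s' a)); last first.
    by move=> s _; rewrite hpt'.
  by rewrite -mulr_suml hpts mul1r.
have hpe1 : forall s o, pe Q s o <= 1.
  by move=> s o; rewrite -(hpes s); apply: term_le_sum.
split.
  move=> t o a ht; apply/andP; split.
    by apply: sumr_ge0 => s _; exact: hy.
  rewrite -(hsum t ht); apply: ler_sum => s _; apply: term_le_sum => a'; exact: hy.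
split.
  move=> t o ht; rewrite exchange_big /=; exact: hsum.
split; first exact: hx1.
split.
  move=> t s o a ht; apply: mulr_ge0; [exact: hpe | exact: hy].
split; first exact: hx.
split; first exact: hx1p.
split.
  move=> t s ht; rewrite hnu // exchange_big /=.
  by apply: eq_bigr => a _; rewrite -mulr_suml hpes mul1r.
split.
  move=> t s a ht; by rewrite -mulr_suml hpes mul1r.
split; first exact: hpt'.
move=> t s o a ht; rewrite hnu //.
have yle : y t s a <= \sum_a' y t s a' by apply: term_le_sum => a'; exact: hy.
have yle2 : y t s a <= \sum_s' y t s' a by apply: (@term_le_sum _ (fun s' => y t s' a) s) => s'; exact: (hy t s' a ht).
have pey : pe Q s o * y t s a <= y t s a by apply: ler_piMl; [exact: hy|exact: hpe1].
have hd : (\sum_a' y t s a' - y t s a) <= 1 - \sum_s' y t s' a.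
  rewrite -(hsum t ht) -sumrB.
  apply: (@term_le_sum _ (fun s' => \sum_a' y t s' a' - y t s' a) s) => s'.
  by rewrite subr_ge0; apply: term_le_sum => a'; exact: hy.
have hp2 : pe Q s o * (\sum_a' y t s a' - y t s a) <= \sum_a' y t s a' - y t s a.
  by apply: ler_piMl; [rewrite subr_ge0 | exact: hpe1].
have hp0' := hpe s o.
split.
- by apply: ler_wpM2l.
- exact: le_trans pey yle2.
- rewrite mulrBr in hp2.
  change (pe Q s o * \sum_a0 y t s a0 + \sum_s0 y t s0 a - 1 <= pe Q s o * y t s a).
  lra.
Qed.

End Comp.

Theorem mainTheorem10 (R : realFieldType) (XA : finType) (M T : nat)
  (P : 'I_M -> POMDP R XA) (hP : forall m, valid_pomdp (P m)) (hT : (0 < T)%N) :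
  (forall v : R, relax_values T P v <-> fluid_values T P v) /\
  (forall z : R, is_opt_value (relax_values T P) z <-> is_opt_value (fluid_values T P) z).
Proof.
have H1 : forall v : R, relax_values T P v <-> fluid_values T P v.
  move=> v; split.
  - move=> [tau1 [tauO [tauT [delta [hQ [hA hv]]]]]].
    pose tauA (m : 'I_M) t a := \sum_(s : St (P m)) \sum_(o : Ob (P m)) tauO m t s o a.
    have [A [hA0 hAe]] : exists A : nat -> XA -> R,
        (forall t a, (t < T)%N -> 0 <= A t a) /\
        (forall (m : 'I_M) t a, (t < T)%N -> tauA m t a = A t a).
      case: (posnP M) => [hM0|hM].
        exists (fun _ _ => 0); split=> // -[k hk]; exfalso; move: hk; by rewrite hM0.
      exists (tauA (Ordinal hM)); split.
        move=> t a ht; apply: sumr_ge0 => s _; apply: sumr_ge0 => o _.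
        by case: (hQ (Ordinal hM)) => _ [_ [_ [h _]]]; apply: h.
      move=> [k hk] t a ht.
      elim: k hk => [|k IH] hk.
        by congr tauA; apply: val_inj.
      have hk' : (k < M)%N by apply: ltn_trans hk.
      rewrite -(IH hk'); exact: (esym (hA k hk' hk t a ht)).
    exists tau1, tauT, A.
    have hc := fun m => relax_to_fluid hT (hQ m).
    split; first by move=> m s; case: (hQ m) => _ [_ [h _]]; apply: h.
    split; first by move=> m t s a s' ht; case: (hQ m) => _ [_ [_ [_ [h _]]]]; apply: h.
    split; first exact: hA0.
    split; first by move=> m s; case: (hc m) => h _ _; apply: h.
    split; first by move=> m t s ht; case: (hc m) => _ h _; apply: h.
    split; first by move=> m s; case: (hQ m) => _ [_ [_ [_ [_ [h _]]]]]; apply: h.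
    split; first by move=> m t s a s' ht; case: (hQ m) => _ [_ [_ [_ [_ [_ [_ [_ [h _]]]]]]]]; apply: h.
    split; last exact: hv.
    move=> m t a ht; case: (hc m) => _ _ h; rewrite h //; exact: hAe.
  - move=> [x1 [x [A [h1 [h2 [h3 [h4 [h5 [h6 [h7 [h8 hv]]]]]]]]]]].
    exists x1, (fun m t s o a => pe (P m) s o * \sum_(s' : St (P m)) x m t s a s'), x,
      (fun m t o a => \sum_(s : St (P m)) \sum_(s' : St (P m)) x m t s a s').
    split.
      move=> m; apply: fluid_to_relax => //.
      + exact: h2.
      + exact: h5.
      + exact: h7.
    split; last exact: hv.
    move=> tauA k hk1 hk2 t a ht; rewrite /tauA.
    have E : forall m : 'I_M, \sum_(s : St (P m)) \sum_(o : Ob (P m))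
        pe (P m) s o * \sum_(s' : St (P m)) x m t s a s' = A t a.
      move=> m; rewrite -(h8 m t a ht); apply: eq_bigr => s _.
      by rewrite -mulr_suml; case: (hP m) => _ [_ [_ [-> _]]]; rewrite mul1r.
    by rewrite !E.
split=> // z; rewrite /is_opt_value; split.
- move=> [hz hw]; split; first by apply/H1.
  by move=> w /H1; apply: hw.
- move=> [hz hw]; split; first by apply/H1.
  by move=> w /H1; apply: hw.
Qed.
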